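(* Let $\{X_s,\|\cdot\|_s\}_{s\in\mathbb N_0}$ be a sequence of Banach spaces satisfying (F1)–(F3), let $\Theta$ be a $BK$-space, and let $\{g_i\}_{i=1}^\infty\in(X_0^* )^{\mathbb N}$ satisfy the lower $\Theta$-frame condition for $X_0$: there is $A>0$ with $\{g_i(f)\}_{i=1}^\infty\in\Theta$ and $A\|f\|_0\le|||\{g_i(f)\}_{i=1}^\infty|||_\Theta$ for every $f\in X_0$. For $s\in\mathbb N_0$ define $\Theta_s:=\{\{g_i(f)\}_{i=1}^\infty:f\in X_s\}$ with norm $|||\{g_i(f)\}_{i=1}^\infty|||_s:=\|f\|_s$. Then: (a) $\{\Theta_s\}_{s\in\mathbb N_0}$ is a sequence of $BK$-spaces satisfying (F1)–(F3), and $\{g_i|_{X_F}\}_{i=1}^\infty$ is an $F$-frame for $X_F$ with respect to $\Theta_F$ with bounds $A_s=B_s=1$, $s\in\mathbb N_0$; (b) if $\{g_i\}$ has a biorthogonal sequence $\{f_i\}_{i=1}^\infty\in(X_F)^{\mathbb N}$ (i.e. $g_i(f_j)=\delta_{ij}$), then for each $s\in\mathbb N_0$, $\Theta_s$ is a $CB$-space if and only if $\{f_i\}$ is a Schauder basis of $X_s$.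
   Context: Conditions (F1)–(F3) for a sequence $\{Y_s,|\cdot|_s\}_{s\in\mathbb N_0}$ of separable Banach spaces: (F1) $\{0\}\neq\bigcap_sY_s\subseteq\dots\subseteq Y_1\subseteq Y_0$; (F2) $|\cdot|_0\le|\cdot|_1\le\dots$; (F3) $Y_F:=\bigcap_sY_s$ dense in each $Y_s$. $X_F=\bigcap_sX_s$, $\Theta_F=\bigcap_s\Theta_s$. $BK$-space: Banach sequence space with continuous coordinate functionals; $CB$-space: $BK$-space in which the canonical vectors $e_i=\{\delta_{ki}\}_k$ form a Schauder basis. $F$-frame for $X_F$ w.r.t. $\Theta_F$ with bounds $A_s,B_s$: $\{g_i\}\in(X_F^* )^{\mathbb N}$ with $\{g_i(f)\}\in\Theta_F$ and $A_s\|f\|_s\le|||\{g_i(f)\}|||_s\le B_s\|f\|_s$ for all $f\in X_F$, $s\in\mathbb N_0$, together with an operator $V:\Theta_F\to X_F$ with $V(\{g_i(f)\})=f$ for $f\in X_F$ that is $F$-bounded: $\|Vc\|_s\le K_s|||c|||_s$ for each $s$. *)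

(* Defs.v *)
From Stdlib Require Import Reals Lra ClassicalEpsilon.
Open Scope R_scope.

Section Gen.
Context {V : Type} (z : V) (add : V -> V -> V) (scal : R -> V -> V).

Definition vsub (x y : V) : V := add x (scal (-1) y).

Definition is_vector_space : Prop :=
  (forall x y w, add x (add y w) = add (add x y) w) /\
  (forall x y, add x y = add y x) /\
  (forall x, add x z = x) /\
  (forall x, add x (scal (-1) x) = z) /\
  (forall x, scal 1 x = x) /\
  (forall a b x, scal a (scal b x) = scal (a * b) x) /\
  (forall a x y, scal a (add x y) = add (scal a x) (scal a y)) /\
  (forall a b x, scal (a + b) x = add (scal a x) (scal b x)).

Definition is_subspace (S : V -> Prop) : Prop :=
  S z /\ (forall x y, S x -> S y -> S (add x y)) /\
  (forall a x, S x -> S (scal a x)).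

Definition is_norm_on (S : V -> Prop) (n : V -> R) : Prop :=
  (forall x, S x -> 0 <= n x) /\
  (forall x, S x -> n x = 0 -> x = z) /\
  (forall a x, S x -> n (scal a x) = Rabs a * n x) /\
  (forall x y, S x -> S y -> n (add x y) <= n x + n y).

Definition is_complete (S : V -> Prop) (n : V -> R) : Prop :=
  forall u : nat -> V, (forall k, S (u k)) ->
    (forall eps, 0 < eps -> exists N, forall p q, (N <= p)%nat -> (N <= q)%nat ->
        n (vsub (u p) (u q)) < eps) ->
    exists x, S x /\ forall eps, 0 < eps -> exists N, forall p, (N <= p)%nat ->
        n (vsub (u p) x) < eps.

Definition is_Banach (S : V -> Prop) (n : V -> R) : Prop :=
  is_subspace S /\ is_norm_on S n /\ is_complete S n.

Definition is_separable (S : V -> Prop) (n : V -> R) : Prop :=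
  exists d : nat -> V, (forall k, S (d k)) /\
    forall x, S x -> forall eps, 0 < eps -> exists k, n (vsub x (d k)) < eps.

Definition capF (Y : nat -> V -> Prop) (x : V) : Prop := forall s, Y s x.

Definition F_conditions (Y : nat -> V -> Prop) (n : nat -> V -> R) : Prop :=
  (forall s, is_Banach (Y s) (n s) /\ is_separable (Y s) (n s)) /\
  (exists x, capF Y x /\ x <> z) /\
  (forall s x, Y (S s) x -> Y s x) /\
  (forall s x, Y (S s) x -> n s x <= n (S s) x) /\
  (forall s x, Y s x -> forall eps, 0 < eps ->
     exists y, capF Y y /\ n s (vsub x y) < eps).

Fixpoint psum (a : nat -> R) (x : nat -> V) (N : nat) : V :=
  match N with
  | O => z
  | S N' => add (psum a x N') (scal (a N') (x N'))
  end.

Definition series_conv_to (n : V -> R) (a : nat -> R) (x : nat -> V) (y : V) : Prop :=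
  forall eps, 0 < eps -> exists N0, forall N, (N0 <= N)%nat ->
    n (vsub (psum a x N) y) < eps.

Definition is_Schauder_basis (S : V -> Prop) (n : V -> R) (x : nat -> V) : Prop :=
  (forall i, S (x i)) /\
  forall y, S y -> exists! a : nat -> R, series_conv_to n a x y.

Definition is_linear_on {W : Type} (S : W -> Prop) (addW : W -> W -> W)
  (scalW : R -> W -> W) (h : W -> V) : Prop :=
  (forall x y, S x -> S y -> h (addW x y) = add (h x) (h y)) /\
  (forall a x, S x -> h (scalW a x) = scal a (h x)).

End Gen.

(* Sequence spaces: sequences indexed by nat (index i corresponds to i+1 in the paper) *)
Definition seq0 : nat -> R := fun _ => 0.
Definition seqadd (c d : nat -> R) : nat -> R := fun i => c i + d i.
Definition seqscal (a : R) (c : nat -> R) : nat -> R := fun i => a * c i.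

Definition canon (i : nat) : nat -> R := fun k => if Nat.eqb k i then 1 else 0.

Definition is_BK (Th : (nat -> R) -> Prop) (tn : (nat -> R) -> R) : Prop :=
  is_Banach seq0 seqadd seqscal Th tn /\
  forall i, exists C, forall c, Th c -> Rabs (c i) <= C * tn c.

Definition is_CB (Th : (nat -> R) -> Prop) (tn : (nat -> R) -> R) : Prop :=
  is_BK Th tn /\ is_Schauder_basis seq0 seqadd seqscal Th tn canon.

Definition is_cont_lin_functional {V : Type} (add : V -> V -> V) (scal : R -> V -> V)
  (S : V -> Prop) (n : V -> R) (g : V -> R) : Prop :=
  (forall x y, S x -> S y -> g (add x y) = g x + g y) /\
  (forall a x, S x -> g (scal a x) = a * g x) /\
  (exists C, forall x, S x -> Rabs (g x) <= C * n x).

Definition is_F_dual_elt {V : Type} (add : V -> V -> V) (scal : R -> V -> V)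
  (X : nat -> V -> Prop) (n : nat -> V -> R) (g : V -> R) : Prop :=
  (forall x y, capF X x -> capF X y -> g (add x y) = g x + g y) /\
  (forall a x, capF X x -> g (scal a x) = a * g x) /\
  (exists s C, forall x, capF X x -> Rabs (g x) <= C * n s x).

Definition coeffs {V : Type} (g : nat -> V -> R) (f : V) : nat -> R := fun i => g i f.

Definition is_F_frame {V : Type} (add : V -> V -> V) (scal : R -> V -> V)
  (X : nat -> V -> Prop) (n : nat -> V -> R)
  (Th : nat -> (nat -> R) -> Prop) (tn : nat -> (nat -> R) -> R)
  (g : nat -> V -> R) (A B : nat -> R) : Prop :=
  (forall i, is_F_dual_elt add scal X n (g i)) /\
  (forall f, capF X f -> capF Th (coeffs g f)) /\
  (forall s f, capF X f ->
     A s * n s f <= tn s (coeffs g f) <= B s * n s f) /\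
  exists Vop : (nat -> R) -> V,
    (forall c, capF Th c -> capF X (Vop c)) /\
    is_linear_on add scal (capF Th) seqadd seqscal Vop /\
    (forall f, capF X f -> Vop (coeffs g f) = f) /\
    exists K : nat -> R, forall s c, capF Th c -> n s (Vop c) <= K s * tn s c.

Definition Theta_s {V : Type} (X : nat -> V -> Prop) (g : nat -> V -> R)
  (s : nat) (c : nat -> R) : Prop :=
  exists f, X s f /\ forall i, g i f = c i.

(* |||(g_i(f))_i|||_s := ||f||_s  (f is chosen; it is unique under the lower frame bound) *)
Definition theta_norm {V : Type} (z : V) (X : nat -> V -> Prop) (n : nat -> V -> R)
  (g : nat -> V -> R) (s : nat) (c : nat -> R) : R :=
  n s (epsilon (inhabits z) (fun f => X s f /\ forall i, g i f = c i)).

(* Main.v *)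
Require Import Defs.
From Stdlib Require Import Reals Lra FunctionalExtensionality ClassicalEpsilon.
Open Scope R_scope.

Theorem theorem4p4
  (V : Type) (z : V) (add : V -> V -> V) (scal : R -> V -> V)
  (X : nat -> V -> Prop) (nrm : nat -> V -> R)
  (Theta : (nat -> R) -> Prop) (thnorm : (nat -> R) -> R)
  (g : nat -> V -> R)
  (HV : is_vector_space z add scal)
  (HF : F_conditions z add scal X nrm)
  (HBK : is_BK Theta thnorm)
  (Hg : forall i, is_cont_lin_functional add scal (X 0%nat) (nrm 0%nat) (g i))
  (Hlow : exists A, 0 < A /\ forall f, X 0%nat f ->
            Theta (coeffs g f) /\ A * nrm 0%nat f <= thnorm (coeffs g f)) :
  ( (forall s, is_BK (Theta_s X g s) (theta_norm z X nrm g s)) /\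
    F_conditions seq0 seqadd seqscal (Theta_s X g) (theta_norm z X nrm g) /\
    is_F_frame add scal X nrm (Theta_s X g) (theta_norm z X nrm g) g
      (fun _ => 1) (fun _ => 1) ) /\
  ( forall f : nat -> V,
      (forall j, capF X (f j)) ->
      (forall i j, g i (f j) = if Nat.eqb i j then 1 else 0) ->
      forall s, is_CB (Theta_s X g s) (theta_norm z X nrm g s) <->
                is_Schauder_basis z add scal (X s) (nrm s) f ).
Proof.
  destruct HV as (vA & vC & v0 & vN & v1 & vSA & vSD & vDS).
  destruct HF as (HBan & (x0 & Hx0 & Hx0nz) & Hdec & Hmon & Hdens).
  destruct HBK as (((ThZ & ThAdd & ThScal) & (ThP & ThD & ThS & ThT) & _) & _).
  destruct Hlow as (A & HA & Hlow).
  assert (Xsub : forall s, is_subspace z add scal (X s)) by (intro s; apply (HBan s)).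
  assert (Xnorm : forall s, is_norm_on z add scal (X s) (nrm s)) by (intro s; apply (HBan s)).
  assert (F0 : forall s x, X s x -> X 0%nat x).
  { induction s; intros x Hx; auto. }
  assert (Fn : forall s x, X s x -> nrm 0%nat x <= nrm s x).
  { induction s; intros x Hx. lra. specialize (Hmon s x Hx). specialize (IHs x (Hdec s x Hx)). lra. }
  assert (gadd : forall i x y, X 0%nat x -> X 0%nat y -> g i (add x y) = g i x + g i y)
    by (intros; apply (Hg i); auto).
  assert (gscal : forall i a x, X 0%nat x -> g i (scal a x) = a * g i x)
    by (intros; apply (Hg i); auto).
  assert (Xz : forall s, X s z) by (intro s; apply (Xsub s)).
  assert (Xadd : forall s x y, X s x -> X s y -> X s (add x y)) by (intro s; apply (Xsub s)).
  assert (Xscal : forall s a x, X s x -> X s (scal a x)) by (intro s; apply (Xsub s)).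
  assert (Xvsub : forall s x y, X s x -> X s y -> X s (vsub add scal x y))
    by (intros; unfold vsub; auto).
  assert (gz : forall i, g i z = 0).
  { intro i. rewrite <- (vN z). rewrite gadd, gscal; auto. lra. }
  assert (cz : coeffs g z = seq0).
  { extensionality i. unfold coeffs, seq0. auto. }
  assert (cadd : forall x y, X 0%nat x -> X 0%nat y ->
     coeffs g (add x y) = seqadd (coeffs g x) (coeffs g y)).
  { intros. extensionality i. unfold coeffs, seqadd. auto. }
  assert (cscal : forall a x, X 0%nat x -> coeffs g (scal a x) = seqscal a (coeffs g x)).
  { intros. extensionality i. unfold coeffs, seqscal. auto. }
  assert (cvsub : forall x y, X 0%nat x -> X 0%nat y ->
     coeffs g (vsub add scal x y) = vsub seqadd seqscal (coeffs g x) (coeffs g y)).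
  { intros. unfold vsub. rewrite cadd, cscal; auto. }
  assert (th0 : thnorm seq0 = 0).
  { assert (E : seqscal 0 seq0 = seq0) by (extensionality i; unfold seqscal, seq0; lra).
    rewrite <- E, ThS; auto. rewrite Rabs_R0. lra. }
  assert (vsubz : forall x y, vsub add scal x y = z -> x = y).
  { unfold vsub; intros x y H.
    rewrite <- (v0 y). rewrite <- H, vA, (vC y x), <- vA, vN, v0. reflexivity. }
  assert (uniq : forall x y, X 0%nat x -> X 0%nat y -> coeffs g x = coeffs g y -> x = y).
  { intros x y Hx Hy Hc. apply vsubz.
    set (d := vsub add scal x y).
    assert (Hd : X 0%nat d) by (apply Xvsub; auto).
    assert (Ec : coeffs g d = seq0).
    { unfold d. rewrite cvsub, Hc; auto. extensionality i. unfold vsub, seqadd, seqscal, seq0. lra. }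
    destruct (Hlow d Hd) as [_ Hl]. rewrite Ec, th0 in Hl.
    destruct (Xnorm 0%nat) as (nP & nD & _).
    apply nD; auto. specialize (nP d Hd). nra. }
  assert (key : forall s f, X s f -> theta_norm z X nrm g s (coeffs g f) = nrm s f).
  { intros s f Hf. unfold theta_norm.
    destruct (epsilon_spec (inhabits z) (fun f0 => X s f0 /\ forall i, g i f0 = coeffs g f i))
      as [H1 H2].
    { exists f. split; auto. }
    f_equal. apply uniq; eauto. extensionality i. apply H2. }
  assert (memb : forall s c, Theta_s X g s c -> exists f, X s f /\ c = coeffs g f).
  { intros s c [f [Hf Hc]]. exists f. split; auto. extensionality i. symmetry. apply Hc. }
  assert (inTh : forall s f, X s f -> Theta_s X g s (coeffs g f)).
  { intros s f Hf. exists f. split; auto. }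
  assert (key2 : forall s f h, X s f -> X s h ->
    theta_norm z X nrm g s (vsub seqadd seqscal (coeffs g f) (coeffs g h)) = nrm s (vsub add scal f h)).
  { intros. rewrite <- cvsub by eauto. apply key. auto. }
  assert (ThSub : forall s, is_subspace seq0 seqadd seqscal (Theta_s X g s)).
  { intro s. split; [|split].
    - rewrite <- cz. apply inTh; auto.
    - intros c d Hc Hd. destruct (memb _ _ Hc) as (f1 & H1 & ->). destruct (memb _ _ Hd) as (f2 & H2 & ->).
      rewrite <- cadd by eauto. apply inTh; auto.
    - intros a c Hc. destruct (memb _ _ Hc) as (f1 & H1 & ->). rewrite <- cscal by eauto. apply inTh; auto. }
  assert (ThBK : forall s, is_BK (Theta_s X g s) (theta_norm z X nrm g s)).
  { intro s. destruct (Xnorm s) as (nP & nD & nS & nT).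
    split; [split; [|split]|].
    - apply ThSub.
    - split; [|split; [|split]].
      + intros c Hc. destruct (memb _ _ Hc) as (f1 & H1 & ->). rewrite key; auto.
      + intros c Hc E. destruct (memb _ _ Hc) as (f1 & H1 & ->). rewrite key in E; auto.
        rewrite (nD f1 H1 E). auto.
      + intros a c Hc. destruct (memb _ _ Hc) as (f1 & H1 & ->). rewrite <- cscal by eauto.
        rewrite !key; auto.
      + intros c d Hc Hd. destruct (memb _ _ Hc) as (f1 & H1 & ->). destruct (memb _ _ Hd) as (f2 & H2 & ->).
        rewrite <- cadd by eauto. rewrite !key; auto.
    - intros u Hu Hcau.
      set (F := fun k => epsilon (inhabits z) (fun f => X s f /\ u k = coeffs g f)).
      assert (HFk : forall k, X s (F k) /\ u k = coeffs g (F k)).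
      { intro k. unfold F. apply epsilon_spec. apply memb. auto. }
      destruct (proj2 (proj2 (proj1 (HBan s))) F) as (x & Hx & Hlim).
      + intro k; apply HFk.
      + intros eps Heps. destruct (Hcau eps Heps) as (N & HN). exists N. intros p q Hp Hq.
        specialize (HN p q Hp Hq). destruct (HFk p) as [Hp1 Hp2]. destruct (HFk q) as [Hq1 Hq2].
        rewrite Hp2, Hq2, key2 in HN; auto.
      + exists (coeffs g x). split; [apply inTh; auto|].
        intros eps Heps. destruct (Hlim eps Heps) as (N & HN). exists N. intros p Hp.
        destruct (HFk p) as [Hp1 Hp2]. rewrite Hp2, key2; auto.
    - intro i. destruct (Hg i) as (_ & _ & C & HC). exists (Rabs C).
      intros c Hc. destruct (memb _ _ Hc) as (f1 & H1 & ->). rewrite key; auto.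
      unfold coeffs. specialize (HC f1 (F0 _ _ H1)). specialize (Fn s f1 H1).
      specialize (nP f1 H1). assert (0 <= nrm 0%nat f1) by (destruct (Xnorm 0%nat) as (nP0 & _); eauto).
      pose proof (Rle_abs C). pose proof (Rabs_pos C). nra. }
  assert (capTh : forall c, capF (Theta_s X g) c -> exists f, capF X f /\ c = coeffs g f).
  { intros c Hc. destruct (memb 0%nat c (Hc 0%nat)) as (f0 & H0 & E0). exists f0. split; auto.
    intro s. destruct (memb s c (Hc s)) as (fs & Hs & Es).
    replace f0 with fs; auto. apply uniq; eauto. congruence. }
  split; [split; [|split]|].
  - exact ThBK.
  - split; [|split; [|split; [|split]]].
    + intro s. split; [apply ThBK|].
      destruct (proj2 (HBan s)) as (d & Hd & Hdd).
      exists (fun k => coeffs g (d k)). split; [intro k; apply inTh; auto|].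
      intros c Hc eps Heps. destruct (memb _ _ Hc) as (f1 & H1 & ->).
      destruct (Hdd f1 H1 eps Heps) as (k & Hk). exists k. rewrite key2; auto.
    + exists (coeffs g x0). split; [intro s; apply inTh; apply Hx0|].
      intro E. apply Hx0nz. apply uniq; [apply Hx0|auto|]. rewrite E, cz. reflexivity.
    + intros s c Hc. destruct (memb _ _ Hc) as (f1 & H1 & ->). apply inTh; auto.
    + intros s c Hc. destruct (memb _ _ Hc) as (f1 & H1 & ->). rewrite !key; auto.
    + intros s c Hc eps Heps. destruct (memb _ _ Hc) as (f1 & H1 & ->).
      destruct (Hdens s f1 H1 eps Heps) as (y & Hy & Hy2).
      exists (coeffs g y). split; [intro t; apply inTh; apply Hy|]. rewrite key2; auto.
  - split; [|split; [|split]].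
    + intro i. split; [|split].
      * intros x y Hx Hy. apply gadd; auto.
      * intros a x Hx. apply gscal; auto.
      * destruct (Hg i) as (_ & _ & C & HC). exists 0%nat, C. intros x Hx. apply HC; auto.
    + intros f Hf s. apply inTh; auto.
    + intros s f Hf. rewrite key; auto. lra.
    + set (Vop := fun c => epsilon (inhabits z) (fun f => capF X f /\ c = coeffs g f)).
      assert (HVop : forall c, capF (Theta_s X g) c -> capF X (Vop c) /\ c = coeffs g (Vop c)).
      { intros c Hc. unfold Vop. apply epsilon_spec. apply capTh; auto. }
      exists Vop. split; [|split; [|split]].
      * intros c Hc. apply HVop; auto.
      * split.
        -- intros c d Hc Hd. destruct (HVop c Hc) as [Hc1 Hc2]. destruct (HVop d Hd) as [Hd1 Hd2].
           assert (Hcd : capF (Theta_s X g) (seqadd c d)) by (intro s; apply ThSub; auto).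
           destruct (HVop _ Hcd) as [Hcd1 Hcd2].
           apply uniq; [apply Hcd1|apply Xadd; [apply Hc1|apply Hd1]|].
           rewrite cadd, <- Hc2, <- Hd2, <- Hcd2; [reflexivity|apply Hc1|apply Hd1].
        -- intros a c Hc. destruct (HVop c Hc) as [Hc1 Hc2].
           assert (Hac : capF (Theta_s X g) (seqscal a c)) by (intro s; apply ThSub; auto).
           destruct (HVop _ Hac) as [Ha1 Ha2].
           apply uniq; [apply Ha1|apply Xscal; apply Hc1|].
           rewrite cscal, <- Hc2, <- Ha2; [reflexivity|apply Hc1].
      * intros f Hf. assert (Hc : capF (Theta_s X g) (coeffs g f)) by (intro s; apply inTh; auto).
        destruct (HVop _ Hc) as [H1 H2]. apply uniq; auto.
      * exists (fun _ => 1). intros s c Hc. destruct (HVop c Hc) as [H1 H2].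
        rewrite H2 at 2. rewrite key; auto. lra.
  - intros e He Hbi s.
    assert (ce : forall j, coeffs g (e j) = canon j).
    { intro j. extensionality i. unfold coeffs, canon. apply Hbi. }
    assert (ps : forall a N, X s (psum z add scal a e N) /\
        coeffs g (psum z add scal a e N) = psum seq0 seqadd seqscal a canon N).
    { intros a N. induction N as [|N [IH1 IH2]]; simpl.
      - split; auto.
      - split. apply Xadd; auto. apply Xscal; apply He.
        rewrite cadd, cscal, IH2, ce; [reflexivity|apply (He N 0%nat)|apply (F0 s); auto|].
        apply (F0 s). apply Xscal, He. }
    assert (eqv : forall y a, X s y ->
      (series_conv_to seq0 seqadd seqscal (theta_norm z X nrm g s) a canon (coeffs g y) <->
       series_conv_to z add scal (nrm s) a e y)).
    { intros y a Hy. unfold series_conv_to.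
      split; intros H eps Heps; destruct (H eps Heps) as (N0 & HN); exists N0; intros N HN0;
        specialize (HN N HN0); destruct (ps a N) as [P1 P2].
      - rewrite <- P2, key2 in HN; auto.
      - rewrite <- P2, key2; auto. }
    split.
    + intros [_ [Hc Hs]]. split; [intro i; apply He|].
      intros y Hy. destruct (Hs (coeffs g y) (inTh _ _ Hy)) as (a & Ha & Hu).
      exists a. split; [apply eqv; auto|]. intros a' Ha'. apply Hu. apply eqv; auto.
    + intros [Hc Hs]. split; [apply ThBK|]. split.
      * intro i. rewrite <- ce. apply inTh; apply He.
      * intros c Hcc. destruct (memb _ _ Hcc) as (y & Hy & ->).
        destruct (Hs y Hy) as (a & Ha & Hu).
        exists a. split; [apply eqv; auto|]. intros a' Ha'. apply Hu. apply eqv; auto.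
Qed.
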